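(* Let $G$ be a finitely generated group and $M$ a finitely generated $G$-module, and suppose $N$ is a fixed finitely generated subsemimodule of $M$ whose membership problem is undecidable. Then the submonoid membership problem for the semidirect product $M\rtimes G$ is undecidable, namely for the fixed finitely generated submonoid $N\rtimes G=\{(n,g): n\in N, g\in G\}$.
   Context: A $G$-module is an abelian group with a left action of $G$ by automorphisms (a $\mathbb ZG$-module); a subsemimodule is a submonoid closed under the action of $G$ (a $\mathbb NG$-subsemimodule), and $\mathbb NG\cdot X$ denotes the subsemimodule generated by $X$. Fix a finite generating set $\Sigma$ of $G$, $\Sigma^{\pm}=\Sigma\cup\Sigma^{-1}$, and a finite generating set $B$ of $M$. Let $\mathbb Z\Sigma^{\pm}$ be the free ring on $\Sigma^{\pm}$ with canonical surjection $\pi:\mathbb Z\Sigma^{\pm}\to\mathbb ZG$, let $\widetilde M$ be the free $\mathbb Z\Sigma^{\pm}$-module on $B$ and $\rho:\widetilde M\to M$ the canonical projection fixing $B$. Elements of $M$ are represented by elements of $\widetilde M$. The membership problem for a subsemimodule $N$ of $M$ asks, given $x\in\widetilde M$, whether $\rho(x)\in N$. The semidirect product $M\rtimes G$ is $M\times G$ with $(m,g)(m',g')=(m+gm',gg')$. The submonoid membership problem for a fixed finitely generated submonoid $S$ of a finitely generated group $H$ with finite generating set $\Delta$ asks, given a word $w$ over $\Delta\cup\Delta^{-1}$, whether the element represented by $w$ lies in $S$. *)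

(* Defs.v *)
From mathcomp Require Import all_boot all_order all_algebra.
Unset Printing Implicit Defensive.
Import GRing.Theory.
Local Open Scope ring_scope.

(* Model of computation: Kleene partial recursive (mu-recursive)       *)
(* functions on nat.  Argument lists are seq nat; missing arguments    *)
(* default to 0 (this does not change the computable class).           *)
Inductive prf : Type :=
| PZero
| PSucc
| PProj of nat
| PComp of prf & seq prf
| PRec of prf & prf
| PMin of prf.

Inductive evalp : prf -> seq nat -> nat -> Prop :=
| ev_zero v : evalp PZero v 0
| ev_succ v : evalp PSucc v (nth 0%N v 0).+1
| ev_proj i v : evalp (PProj i) v (nth 0%N v i)
| ev_comp f gs v ys y :
    evalps gs v ys -> evalp f ys y -> evalp (PComp f gs) v y
| ev_rec0 f g v y : evalp f v y -> evalp (PRec f g) (0%N :: v) y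
| ev_recS f g n v r y :
    evalp (PRec f g) (n :: v) r -> evalp g [:: n, r & v] y ->
    evalp (PRec f g) (n.+1 :: v) y
| ev_min f v n :
    evalp f (n :: v) 0 ->
    (forall m, (m < n)%N -> exists k, (0 < k)%N /\ evalp f (m :: v) k) ->
    evalp (PMin f) v n
with evalps : seq prf -> seq nat -> seq nat -> Prop :=
| evs_nil v : evalps [::] v [::]
| evs_cons g gs v y ys :
    evalp g v y -> evalps gs v ys -> evalps (g :: gs) v (y :: ys).

Definition nat_decidable (P : nat -> Prop) : Prop :=
  exists p : prf, forall n, exists y, evalp p [:: n] y /\ (y = 1%N <-> P n).

Definition decidable_on {T : countType} (P : T -> Prop) : Prop :=
  nat_decidable (fun n => match @pickle_inv T n with Some x => P x | None => False end).

Record group := Group {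
  gcar :> Type;
  gmul : gcar -> gcar -> gcar;
  gone : gcar;
  ginv : gcar -> gcar;
  gmulA : forall x y z, gmul x (gmul y z) = gmul (gmul x y) z;
  gmul1 : forall x, gmul gone x = x;
  gmulV : forall x, gmul (ginv x) x = gone
}.
Arguments gmul {_} _ _.
Arguments ginv {_} _.
Arguments gone _.

Definition is_Gmodule {G : group} {M : zmodType} (act : G -> M -> M) : Prop :=
  [/\ forall g x y, act g (x + y) = act g x + act g y,
      forall x, act (gone G) x = x
    & forall g h x, act (gmul g h) x = act g (act h x)].

Definition letter {G : group} (S : seq G) (l : 'I_(size S) * bool) : G :=
  if l.2 then nth (gone G) S l.1 else ginv (nth (gone G) S l.1).

Definition gword {G : group} (S : seq G) (w : seq ('I_(size S) * bool)) : G :=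
  foldr (fun l g => gmul (letter S l) g) (gone G) w.

Definition generates {G : group} (S : seq G) : Prop :=
  forall g : G, exists w, g = gword S w.

(* Elements of the free Z<Sigma^{+-}>-module on B (tilde M): finite formal *)
(* sums of terms  z * (s_1 ... s_k) * b  with z integer, s_j in Sigma^{+-} *)
(* and b in B (index into B).                                              *)
Definition freemod (s b : nat) : Type := seq (int * seq ('I_s * bool) * 'I_b).

Definition rho {G : group} {M : zmodType} (act : G -> M -> M)
    (S : seq G) (B : seq M) (x : freemod (size S) (size B)) : M :=
  \sum_(t <- x) (act (gword S t.1.2) (nth 0 B t.2)) *~ t.1.1.

Definition module_generates {G : group} {M : zmodType} (act : G -> M -> M)
    (S : seq G) (B : seq M) : Prop :=
  forall m : M, exists x, m = rho act S B x.

Definition in_NGspan {G : group} {M : zmodType} (act : G -> M -> M)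
    (X : seq M) (m : M) : Prop :=
  exists l : seq (G * 'I_(size X)), m = \sum_(t <- l) act t.1 (nth 0 X t.2).

Definition sdmul {G : group} {M : zmodType} (act : G -> M -> M)
    (p q : M * G) : M * G := (p.1 + act p.2 q.1, gmul p.2 q.2).
Definition sdone (G : group) (M : zmodType) : M * G := (0, gone G).
Definition sdinv {G : group} {M : zmodType} (act : G -> M -> M)
    (p : M * G) : M * G := (- act (ginv p.2) p.1, ginv p.2).

Definition sdletter {G : group} {M : zmodType} (act : G -> M -> M)
    (D : seq (M * G)) (l : 'I_(size D) * bool) : M * G :=
  if l.2 then nth (sdone G M) D l.1 else sdinv act (nth (sdone G M) D l.1).

Definition sdword {G : group} {M : zmodType} (act : G -> M -> M)
    (D : seq (M * G)) (w : seq ('I_(size D) * bool)) : M * G :=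
  foldr (fun l p => sdmul act (sdletter act D l) p) (sdone G M) w.

Definition sd_generates {G : group} {M : zmodType} (act : G -> M -> M)
    (D : seq (M * G)) : Prop :=
  forall p : M * G, exists w, p = sdword act D w.

(* Membership in N x| G = {(n,g) : n in N, g in G}, N = NG.X. *)
Definition in_NsdG {G : group} {M : zmodType} (act : G -> M -> M)
    (X : seq M) (p : M * G) : Prop := in_NGspan act X p.1.

(* Main.v *)
Require Import Defs.
From mathcomp Require Import all_boot all_order all_algebra.
From mathcomp Require Import zify.

Definition tk k (v : seq nat) := mkseq (fun i => nth 0%N v i) k.
Definition cmp k (F : seq nat -> nat) :=
  exists p, forall v, evalp p v (F (tk k v)).

Lemma size_tk k v : size (tk k v) = k.
Proof. by rewrite size_mkseq. Qed.

Lemma tk_id k v : size v = k -> tk k v = v.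
Proof.
move=> Hs; apply: (@eq_from_nth _ 0%N); rewrite size_tk ?Hs // => i Hi.
by rewrite nth_mkseq.
Qed.

Lemma tkS k v : tk k.+1 v = nth 0%N v 0 :: tk k (behead v).
Proof.
apply: (@eq_from_nth _ 0%N); first by rewrite size_tk /= size_tk.
rewrite size_tk => i Hi.
case: i Hi => [|i] Hi; first by rewrite nth_mkseq.
rewrite nth_mkseq //= nth_mkseq //.
by case: v => // *; rewrite !nth_nil.
Qed.

Lemma cmp_ext k F G : cmp k F -> (forall v, size v = k -> F v = G v) -> cmp k G.
Proof.
move=> [p Hp] H; exists p => v; rewrite -H ?size_tk //.
Qed.

Lemma cmp_proj k i : (i < k)%N -> cmp k (fun v => nth 0%N v i).
Proof.
move=> Hi; exists (PProj i) => v; rewrite nth_mkseq //; exact: ev_proj.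
Qed.

Arguments cmp_proj {k i}.

Lemma cmp_succ : cmp 1 (fun v => (nth 0%N v 0).+1).
Proof. exists PSucc => v; rewrite nth_mkseq //; exact: ev_succ. Qed.

Lemma cmp_zero k : cmp k (fun _ => 0%N).
Proof. exists PZero => v; exact: ev_zero. Qed.

Lemma cmp_comp k k' F (gs : seq (seq nat -> nat)) :
  cmp k' F -> size gs = k' -> (forall g, List.In g gs -> cmp k g) ->
  cmp k (fun v => F (map (fun g => g v) gs)).
Proof.
move=> [pF HF] Hs Hg.
have [ps Hps] : exists ps, forall v, evalps ps v [seq g (tk k v) | g <- gs].
  elim: gs Hg {Hs} => [|g gs IH] Hg; first by exists [::] => v; exact: evs_nil.
  have [pg Hpg] := Hg g (or_introl erefl).
  have [ps Hps] := IH (fun g' H => Hg g' (or_intror H)).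
  by exists (pg :: ps) => v; apply: evs_cons.
exists (PComp pF ps) => v; apply: ev_comp (Hps v) _.
have := HF [seq g (tk k v) | g <- gs]; by rewrite [tk k' _]tk_id // size_map.
Qed.

Lemma cmp_comp1 k F g : cmp 1 F -> cmp k g -> cmp k (fun v => F [:: g v]).
Proof.
move=> HF Hg; apply: (@cmp_comp k 1 F [:: g]) => // g' [<-|[]] //.
Qed.

Lemma cmp_comp2 k F g1 g2 : cmp 2 F -> cmp k g1 -> cmp k g2 ->
  cmp k (fun v => F [:: g1 v; g2 v]).
Proof.
move=> HF H1 H2; apply: (@cmp_comp k 2 F [:: g1; g2]) => // g' [<-|[<-|[]]] //.
Qed.

Lemma cmp_comp3 k F g1 g2 g3 : cmp 3 F -> cmp k g1 -> cmp k g2 -> cmp k g3 ->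
  cmp k (fun v => F [:: g1 v; g2 v; g3 v]).
Proof.
move=> HF H1 H2 H3;
apply: (@cmp_comp k 3 F [:: g1; g2; g3]) => // g' [<-|[<-|[<-|[]]]] //.
Qed.

Lemma evalps_proj k v : evalps (mkseq PProj k) v (tk k v).
Proof.
rewrite /tk /mkseq; elim: (iota 0 k) => [|i s IH] /=; first exact: evs_nil.
apply: evs_cons => //; exact: ev_proj.
Qed.

Lemma cmp_cons k F g : cmp k.+1 F -> cmp k g -> cmp k (fun v => F (g v :: v)).
Proof.
move=> [pF HF] [pg Hg]; exists (PComp pF (pg :: mkseq PProj k)) => v.
apply: ev_comp; first by apply: evs_cons; [exact: Hg | exact: evalps_proj].
by have := HF (g (tk k v) :: tk k v); rewrite [tk k.+1 _]tk_id //= size_tk.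
Qed.

Fixpoint precf (F G : seq nat -> nat) n w :=
  if n is n'.+1 then G [:: n', precf F G n' w & w] else F w.

Lemma cmp_rec k F G : cmp k F -> cmp k.+2 G ->
  cmp k.+1 (fun v => precf F G (nth 0%N v 0) (behead v)).
Proof.
move=> [pF HF] [pG HG].
have H : forall n w, size w = k -> evalp (PRec pF pG) (n :: w) (precf F G n w).
  move=> n w Hw; elim: n => [|n IH] /=.
    by apply: ev_rec0; have := HF w; rewrite tk_id.
  apply: ev_recS IH _.
  by have := HG [:: n, precf F G n w & w]; rewrite tk_id //= Hw.
exists (PComp (PRec pF pG) (mkseq PProj k.+1)) => v.
apply: ev_comp; first exact: evalps_proj.
rewrite tkS /=; apply: H; exact: size_tk.
Qed.

Lemma cmp_min k f g : cmp k.+1 f ->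
  (forall w, size w = k -> f (g w :: w) = 0%N /\ forall m, (m < g w)%N -> (0 < f (m :: w))%N) ->
  cmp k g.
Proof.
move=> [pf Hf] H; exists (PMin pf) => v.
have [H1 H2] := H (tk k v) (size_tk _ _).
apply: ev_min.
  by have := Hf (g (tk k v) :: v); rewrite tkS /= H1.
move=> m Hm; exists (f (m :: tk k v)); split; first exact: H2.
by have := Hf (m :: v); rewrite tkS.
Qed.

Lemma cmp_const k c : cmp k (fun _ => c).
Proof.
elim: c => [|c IH]; first exact: cmp_zero.
by have := @cmp_comp1 k _ _ cmp_succ IH.
Qed.

Lemma cmp_drop d k F : cmp k F -> cmp (d + k) (fun v => F (drop d v)).
Proof.
move=> [pF HF]; exists (PComp pF (mkseq (fun i => PProj (d + i)) k)) => v.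
have E : drop d (tk (d + k) v) = mkseq (fun i => nth 0%N v (d + i)) k.
  apply: (@eq_from_nth _ 0%N); first by rewrite size_drop size_tk size_mkseq addKn.
  rewrite size_drop size_tk addKn => i Hi.
  by rewrite nth_drop nth_mkseq ?nth_mkseq // ltn_add2l.
rewrite E; apply: (@ev_comp pF _ v (mkseq (fun i => nth 0%N v (d + i)) k)).
  rewrite /mkseq; elim: (iota 0 k) => [|i s IH] /=; first exact: evs_nil.
  apply: evs_cons => //; exact: ev_proj.
by have := HF (mkseq (fun i => nth 0%N v (d + i)) k); rewrite tk_id // size_mkseq.
Qed.

Arguments cmp_ext {k F} G.
Arguments cmp_comp {k k' F gs}.
Arguments cmp_comp1 {k F g}.
Arguments cmp_comp2 {k F g1 g2}.
Arguments cmp_comp3 {k F g1 g2 g3}.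
Arguments cmp_cons {k F g}.
Arguments cmp_rec {k F G}.
Arguments cmp_min {k f} g.
Arguments cmp_drop d {k F}.

Lemma in_iota_nat i n : List.In i (iota 0 n) -> (i < n)%N.
Proof.
move=> H; have : i \in iota 0 n.
  elim: (iota 0 n) H => [|a s IH] //= [->|H]; rewrite inE ?eqxx //.
  by rewrite IH ?orbT.
by rewrite mem_iota.
Qed.

Lemma cmp_compn k k' F (gs : nat -> seq nat -> nat) :
  cmp k' F -> (forall i, (i < k')%N -> cmp k (gs i)) ->
  cmp k (fun v => F (mkseq (fun i => gs i v) k')).
Proof.
move=> HF Hg.
have := @cmp_comp k k' F (mkseq gs k') HF; rewrite size_mkseq => /(_ erefl).
have E : forall v, [seq g v | g <- mkseq gs k'] = mkseq (fun i => gs i v) k'.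
  by move=> v; rewrite /mkseq -map_comp.
move=> H; apply: (cmp_ext _ (H _)) => [g|v _]; last by rewrite E.
rewrite /mkseq => /List.in_map_iff [i [<- Hi]]; apply: Hg; exact: in_iota_nat.
Qed.
Arguments cmp_compn {k k' F}.

Lemma cmp_lift1 k F g : cmp 1 F -> cmp k g -> cmp k (fun v => F [:: g v]).
Proof. exact: cmp_comp1. Qed.

Lemma size2 (v : seq nat) : size v = 2 -> v = [:: nth 0 v 0; nth 0 v 1].
Proof. by case: v => [|a [|b [|]]]. Qed.
Lemma size1 (v : seq nat) : size v = 1 -> v = [:: nth 0 v 0].
Proof. by case: v => [|a [|]]. Qed.

Lemma add_base : cmp 2 (fun v => nth 0 v 0 + nth 0 v 1).
Proof.
have H := @cmp_rec 1 (fun v => nth 0 v 0) (fun v => (nth 0 v 1).+1)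
  (cmp_proj (isT : 0 < 1)) (cmp_comp1 cmp_succ (cmp_proj (isT : 1 < 3))).
apply: (cmp_ext _ H) => v /size2 -> /=.
by elim: (nth 0 v 0) => //= n ->.
Qed.

Lemma cmp_add {k g1 g2} : cmp k g1 -> cmp k g2 -> cmp k (fun v => g1 v + g2 v).
Proof. move=> H1 H2; exact: (cmp_comp2 add_base H1 H2). Qed.

Lemma mul_base : cmp 2 (fun v => nth 0 v 0 * nth 0 v 1).
Proof.
have H := @cmp_rec 1 (fun v => 0) (fun v => nth 0 v 1 + nth 0 v 2)
  (cmp_zero 1) (cmp_add (cmp_proj (isT : 1 < 3)) (cmp_proj (isT : 2 < 3))).
apply: (cmp_ext _ H) => v /size2 -> /=.
by elim: (nth 0 v 0) => //= n ->; rewrite mulSn addnC.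
Qed.

Lemma cmp_mul {k g1 g2} : cmp k g1 -> cmp k g2 -> cmp k (fun v => g1 v * g2 v).
Proof. move=> H1 H2; exact: (cmp_comp2 mul_base H1 H2). Qed.

Lemma pred_base : cmp 1 (fun v => (nth 0 v 0).-1).
Proof.
have H := @cmp_rec 0 (fun v => 0) (fun v => nth 0 v 0)
  (cmp_zero 0) (cmp_proj (isT : 0 < 2)).
apply: (cmp_ext _ H) => v /size1 -> /=.
by case: (nth 0 v 0).
Qed.

Lemma cmp_pred {k g} : cmp k g -> cmp k (fun v => (g v).-1).
Proof. move=> H; exact: (cmp_comp1 pred_base H). Qed.

Lemma sub_base : cmp 2 (fun v => nth 0 v 1 - nth 0 v 0).
Proof.
have H := @cmp_rec 1 (fun v => nth 0 v 0) (fun v => (nth 0 v 1).-1)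
  (cmp_proj (isT : 0 < 1)) (cmp_pred (cmp_proj (isT : 1 < 3))).
apply: (cmp_ext _ H) => v /size2 -> /=.
by elim: (nth 0 v 0) => [|n /= ->]; rewrite ?subn0 ?subnS.
Qed.

Lemma cmp_sub {k g1 g2} : cmp k g1 -> cmp k g2 -> cmp k (fun v => g1 v - g2 v).
Proof. move=> H1 H2; exact: (cmp_comp2 sub_base H2 H1). Qed.

Lemma iszero_base : cmp 1 (fun v => nat_of_bool (nth 0 v 0 == 0)).
Proof.
have H := @cmp_rec 0 (fun v => 1) (fun v => 0) (cmp_const 0 1) (cmp_zero 2).
apply: (cmp_ext _ H) => v /size1 -> /=.
by case: (nth 0 v 0).
Qed.

Lemma cmp_eq0 {k g} : cmp k g -> cmp k (fun v => nat_of_bool (g v == 0)).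
Proof. move=> H; exact: (cmp_comp1 iszero_base H). Qed.

Lemma cmp_eqn {k g1 g2} : cmp k g1 -> cmp k g2 -> cmp k (fun v => nat_of_bool (g1 v == g2 v)).
Proof.
move=> H1 H2; apply: (cmp_ext _ (cmp_eq0 (cmp_add (cmp_sub H1 H2) (cmp_sub H2 H1)))).
move=> v _; congr nat_of_bool; apply/eqP/eqP; lia.
Qed.

Lemma cmp_ltn {k g1 g2} : cmp k g1 -> cmp k g2 -> cmp k (fun v => nat_of_bool (g1 v < g2 v)).
Proof.
move=> H1 H2; apply: (cmp_ext _ (cmp_sub (cmp_const k 1) (cmp_eq0 (cmp_sub H2 H1)))).
move=> v _; case: (ltnP (g1 v) (g2 v)) => H.
  by have -> : (g2 v - g1 v == 0) = false by apply/eqP; lia.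
by have -> : (g2 v - g1 v == 0) = true by apply/eqP; lia.
Qed.

Lemma pow2_base : cmp 1 (fun v => 2 ^ nth 0 v 0).
Proof.
have H := @cmp_rec 0 (fun v => 1) (fun v => nth 0 v 1 + nth 0 v 1)
  (cmp_const 0 1) (cmp_add (cmp_proj (isT : 1 < 2)) (cmp_proj (isT : 1 < 2))).
apply: (cmp_ext _ H) => v /size1 -> /=.
by elim: (nth 0 v 0) => //= n ->; rewrite expnS mul2n addnn.
Qed.

Lemma cmp_pow2 {k g} : cmp k g -> cmp k (fun v => 2 ^ g v).
Proof. move=> H; exact: (cmp_comp1 pow2_base H). Qed.

Lemma odd_base : cmp 1 (fun v => nat_of_bool (odd (nth 0 v 0))).
Proof.
have H := @cmp_rec 0 (fun v => 0) (fun v => 1 - nth 0 v 1)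
  (cmp_zero 0) (cmp_sub (cmp_const 2 1) (cmp_proj (isT : 1 < 2))).
apply: (cmp_ext _ H) => v /size1 -> /=.
by elim: (nth 0 v 0) => //= n ->; case: (odd n).
Qed.

Lemma cmp_odd {k g} : cmp k g -> cmp k (fun v => nat_of_bool (odd (g v))).
Proof. move=> H; exact: (cmp_comp1 odd_base H). Qed.

Lemma div_base : cmp 2 (fun v => nth 0 v 0 %/ nth 0 v 1).
Proof.
pose f := fun w : seq nat => nat_of_bool (0 < nth 0 w 2) *
   (1 - nat_of_bool (nth 0 w 1 < nth 0 w 2 * nth 0 w 0 + nth 0 w 2)).
have Hf : cmp 3 f.
  apply: cmp_mul; first exact: cmp_ltn (cmp_const _ 0) (cmp_proj (isT : 2 < 3)).
  apply: cmp_sub (cmp_const _ 1) _; apply: cmp_ltn (cmp_proj (isT : 1 < 3)) _.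
  apply: cmp_add (cmp_proj (isT : 2 < 3)).
  exact: cmp_mul (cmp_proj (isT : 2 < 3)) (cmp_proj (isT : 0 < 3)).
apply: (cmp_min _ Hf) => w /size2 ->; rewrite /f /=.
set a := nth 0 w 0; set d := nth 0 w 1.
case: (posnP d) => [->|Hd] /=; first by rewrite divn0.
have E : forall q, (a < d * q + d) = (a %/ d < q.+1).
  by move=> q; rewrite ltn_divLR // mulSn addnC mulnC.
split; first by rewrite E ltnSn.
move=> m Hm; rewrite E ltnS.
by have -> : (a %/ d <= m) = false by apply/negbTE; rewrite -ltnNge.
Qed.

Lemma cmp_div {k g1 g2} : cmp k g1 -> cmp k g2 -> cmp k (fun v => g1 v %/ g2 v).
Proof. move=> H1 H2; exact: (cmp_comp2 div_base H1 H2). Qed.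

Notation code := CodeSeq.code.
Notation decode := CodeSeq.decode.

Lemma code_cons x s : code (x :: s) = 2 ^ x * (code s).*2.+1.
Proof. by []. Qed.

Lemma code_eq0 s : (code s == 0) = (s == [::]).
Proof. by case: s => //= x s; rewrite muln_eq0 expn_eq0. Qed.

Lemma decode_eq0 n : (decode n == [::]) = (n == 0).
Proof. by rewrite -code_eq0 CodeSeq.decodeK. Qed.

Definition hdc n := head 0 (decode n).
Definition tlc n := code (behead (decode n)).

Lemma pow_div x m c : m <= x -> (2 ^ x * c) %/ 2 ^ m = 2 ^ (x - m) * c.
Proof.
move=> H; by rewrite -{1}(subnKC H) expnD -mulnA mulKn // expn_gt0.
Qed.

Lemma hd_base : cmp 1 (fun v => hdc (nth 0 v 0)).
Proof.
pose f := fun w : seq nat => nat_of_bool (0 < nth 0 w 1) *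
   (1 - nat_of_bool (odd (nth 0 w 1 %/ 2 ^ nth 0 w 0))).
have Hf : cmp 2 f.
  apply: cmp_mul; first exact: cmp_ltn (cmp_const _ 0) (cmp_proj (isT : 1 < 2)).
  apply: cmp_sub (cmp_const _ 1) _; apply: cmp_odd; apply: cmp_div.
    exact: (cmp_proj (isT : 1 < 2)).
  exact: cmp_pow2 (cmp_proj (isT : 0 < 2)).
apply: (cmp_min _ Hf) => w /size1 ->; rewrite /f /=.
set n := nth 0 w 0; rewrite /hdc.
case: (posnP n) => [->|Hn] //=.
rewrite -(CodeSeq.decodeK n) in Hn *.
case: (decode n) Hn => [|x s] //= Hn.
rewrite -code_cons CodeSeq.codeK /=.
split.
  rewrite pow_div //.
  have -> : odd (2 ^ (x - x) * (code s).*2.+1) by rewrite subnn expn0 mul1n oddS odd_double.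
  by [].
move=> m Hm; rewrite pow_div ?(ltnW Hm) // oddM.
by case E: (x - m) => [|y]; [lia | rewrite expnS oddM].
Qed.

Lemma cmp_hd {k g} : cmp k g -> cmp k (fun v => hdc (g v)).
Proof. move=> H; exact: (cmp_comp1 hd_base H). Qed.

Lemma tlcE n : tlc n = n %/ 2 ^ (hdc n).+1.
Proof.
rewrite /tlc /hdc; move: (CodeSeq.decodeK n).
case: (decode n) => [|x s] /= <-; first by rewrite div0n.
rewrite expnS [2 * _]mulnC divnMA mulKn ?expn_gt0 //; lia.
Qed.

Lemma cmp_tl {k g} : cmp k g -> cmp k (fun v => tlc (g v)).
Proof.
move=> H; apply: (cmp_ext _ (cmp_div H (cmp_pow2 (cmp_add (cmp_hd H) (cmp_const _ 1))))).
by move=> v _; rewrite tlcE addn1.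
Qed.

Definition itl j n := code (drop j (decode n)).

Lemma tlc_itl j n : tlc (itl j n) = itl j.+1 n.
Proof.
by rewrite /tlc /itl CodeSeq.codeK -drop1 drop_drop add1n.
Qed.

Lemma itl_base : cmp 2 (fun v => itl (nth 0 v 0) (nth 0 v 1)).
Proof.
have H := @cmp_rec 1 (fun v => nth 0 v 0) (fun v => tlc (nth 0 v 1))
  (cmp_proj (isT : 0 < 1)) (cmp_tl (cmp_proj (isT : 1 < 3))).
apply: (cmp_ext _ H) => v /size2 -> /=.
elim: (nth 0 v 0) => /= [|j ->]; last exact: tlc_itl.
by rewrite /itl drop0 CodeSeq.decodeK.
Qed.

Lemma cmp_itl {k g1 g2} : cmp k g1 -> cmp k g2 -> cmp k (fun v => itl (g1 v) (g2 v)).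
Proof. move=> H1 H2; exact: (cmp_comp2 itl_base H1 H2). Qed.

Lemma itl_eq0 j n : (itl j n == 0) = (size (decode n) <= j).
Proof. by rewrite /itl code_eq0 -size_eq0 size_drop subn_eq0. Qed.

Lemma size_base : cmp 1 (fun v => size (decode (nth 0 v 0))).
Proof.
have Hf : cmp 2 (fun w => 1 - nat_of_bool (itl (nth 0 w 0) (nth 0 w 1) == 0)).
  apply: cmp_sub (cmp_const _ 1) _; apply: cmp_eq0.
  exact: cmp_itl (cmp_proj (isT : 0 < 2)) (cmp_proj (isT : 1 < 2)).
apply: (cmp_min _ Hf) => w /size1 -> /=.
rewrite itl_eq0 leqnn; split => // m Hm.
by rewrite itl_eq0 (leqNgt _ m) Hm.
Qed.

Lemma cmp_size {k g} : cmp k g -> cmp k (fun v => size (decode (g v))).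
Proof. move=> H; exact: (cmp_comp1 size_base H). Qed.

Lemma cmp_nth {k g1 g2} : cmp k g1 -> cmp k g2 ->
  cmp k (fun v => nth 0 (decode (g2 v)) (g1 v)).
Proof.
move=> H1 H2; apply: (cmp_ext _ (cmp_hd (cmp_itl H1 H2))) => v _.
by rewrite /hdc /itl CodeSeq.codeK -nth0 nth_drop addn0.
Qed.

Lemma cmp_codecons {k g1 g2} : cmp k g1 -> cmp k g2 ->
  cmp k (fun v => code (g1 v :: decode (g2 v))).
Proof.
move=> H1 H2.
apply: (cmp_ext _ (cmp_mul (cmp_pow2 H1) (cmp_add (cmp_add H2 H2) (cmp_const _ 1)))).
by move=> v _; rewrite code_cons CodeSeq.decodeK addn1 addnn.
Qed.

Lemma cmp_replace0 {k g F} : cmp k.+1 F -> cmp k.+1 g ->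
  cmp k.+1 (fun u => F (g u :: behead u)).
Proof.
move=> HF Hg.
have H : cmp k.+1 (fun u => F (mkseq (fun i => if i is 0 then g u else nth 0 u i) k.+1)).
  apply: (cmp_compn (fun i u => if i is 0 then g u else nth 0 u i) HF) => -[|i] Hi.
    exact: Hg.
  exact: cmp_proj.
apply: (cmp_ext _ H) => u Hu; congr F; apply: (@eq_from_nth _ 0); first by rewrite size_mkseq /= size_behead Hu.
rewrite size_mkseq => i Hi; rewrite nth_mkseq //.
by case: i Hi => //= i _; rewrite nth_behead.
Qed.

Lemma cmp_foldr {p h a c} : cmp p.+2 h -> cmp p a -> cmp p c ->
  cmp p (fun v => foldr (fun x acc => h [:: x, acc & v]) (a v) (decode (c v))).
Proof.
move=> Hh Ha Hc.
pose L := fun v => size (decode (c v)).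
pose g1 := fun u => nth 0 (decode (c (drop 2 u))) (L (drop 2 u) - (nth 0 u 0).+1).
have Hc2 : cmp p.+2 (fun u => c (drop 2 u)) by exact: (cmp_drop 2 Hc).
have Hg1 : cmp p.+2 g1.
  apply: (cmp_nth _ Hc2); apply: (cmp_sub (cmp_size Hc2)).
  by apply: (cmp_ext _ (cmp_add (cmp_proj (isT : 0 < p.+2)) (cmp_const _ 1))) => u _; rewrite addn1.
pose G := fun u => h (g1 u :: behead u).
have HG : cmp p.+2 G by exact: (cmp_replace0 Hh Hg1).
have Hfin := cmp_cons (cmp_rec Ha HG) (cmp_size Hc).
apply: (cmp_ext _ Hfin) => v Hv /=.
suff E : forall j, j <= L v -> precf a G j v =
   foldr (fun x acc => h [:: x, acc & v]) (a v) (drop (L v - j) (decode (c v))).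
  by rewrite E // subnn drop0.
elim=> [|j IH] Hj /=; first by rewrite subn0 drop_oversize.
rewrite IH ?(ltnW Hj) // /G /g1 /=.
rewrite drop0 (drop_nth 0 (n := L v - j.+1)); last by move: Hj; rewrite /L; lia.
by have -> : (L v - j.+1).+1 = L v - j by lia.
Qed.

Lemma cmp_cat {k g1 g2} : cmp k g1 -> cmp k g2 ->
  cmp k (fun v => code (decode (g1 v) ++ decode (g2 v))).
Proof.
move=> H1 H2.
have H := @cmp_foldr k (fun u => code (nth 0 u 0 :: decode (nth 0 u 1))) g2 g1
  (cmp_codecons (cmp_proj (isT : 0 < k.+2)) (cmp_proj (isT : 1 < k.+2))) H2 H1.
apply: (cmp_ext _ H) => v _ /=.
elim: (decode (g1 v)) => [|x s /= ->] /=; first by rewrite CodeSeq.decodeK.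
by rewrite CodeSeq.codeK.
Qed.

Lemma cmp_tab (t : seq nat) {k g} : cmp k g -> cmp k (fun v => nth 0 t (g v)).
Proof.
elim: t g => [|a t IH] g Hg /=.
  by apply: (cmp_ext _ (cmp_const k 0)) => v _; rewrite nth_nil.
have H := cmp_add (cmp_mul (cmp_eq0 Hg) (cmp_const k a))
  (cmp_mul (cmp_sub (cmp_const k 1) (cmp_eq0 Hg)) (IH _ (cmp_pred Hg))).
apply: (cmp_ext _ H) => v _ /=.
by case: (g v) => [|n] /=; rewrite ?mul1n ?muln0 ?addn0 ?mul0n ?add0n ?mul1n.
Qed.

Definition repc j c := code (flatten (nseq j (decode c))).

Lemma cmp_rep {k g1 g2} : cmp k g1 -> cmp k g2 -> cmp k (fun v => repc (g1 v) (g2 v)).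
Proof.
move=> H1 H2.
have H := @cmp_rec 1 (fun _ => 0) (fun u => code (decode (nth 0 u 2) ++ decode (nth 0 u 1)))
  (cmp_zero 1) (cmp_cat (cmp_proj (isT : 2 < 3)) (cmp_proj (isT : 1 < 3))).
apply: (cmp_ext _ (cmp_comp2 H H1 H2)) => v _ /=.
rewrite /repc; elim: (g1 v) => //= j ->.
by rewrite CodeSeq.codeK.
Qed.

Definition allc (f : nat -> nat) n := foldr (fun x acc => f x * acc) 1 (decode n).

Lemma cmp_allc (f : nat -> nat) {k g} : cmp 1 (fun v => f (nth 0 v 0)) -> cmp k g ->
  cmp k (fun v => allc f (g v)).
Proof.
move=> Hf Hg.
have Hf' : cmp k.+2 (fun u => f (nth 0 u 0) * nth 0 u 1).
  apply: cmp_mul (cmp_proj (isT : 1 < k.+2)).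
  exact: (cmp_comp1 Hf (cmp_proj (isT : 0 < k.+2))).
exact: (cmp_foldr Hf' (cmp_const k 1) Hg).
Qed.

Lemma allcP (f : nat -> nat) n : (forall x, f x <= 1) ->
  (allc f n == 1) = all (fun x => f x == 1) (decode n).
Proof.
move=> Hf; rewrite /allc; elim: (decode n) => //= x s <-.
have := Hf x; case: (f x) => [|[|]] //= _; by rewrite ?mul0n ?mul1n.
Qed.

Lemma allc_le1 (f : nat -> nat) n : (forall x, f x <= 1) -> allc f n <= 1.
Proof.
move=> Hf; rewrite /allc; elim: (decode n) => //= x s IH.
have := Hf x; case: (f x) => [|[|]] //= _; by rewrite ?mul0n ?mul1n.
Qed.

Module ModE.
Import GRing.Theory.

Lemma gmulVr (G : group) (x : G) : gmul x (ginv x) = gone G.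
Proof.
set y := gmul x (ginv x).
have yy : gmul y y = y by rewrite /y -gmulA [gmul (ginv x) _]gmulA gmulV gmul1.
by rewrite -[LHS](gmul1 _ y) -[in LHS](gmulV _ y) -gmulA yy gmulV.
Qed.

Lemma gmul1r (G : group) (x : G) : gmul x (gone G) = x.
Proof. by rewrite -(gmulV _ x) gmulA gmulVr gmul1. Qed.

Lemma ginv_uniq (G : group) (g h : G) : gmul h g = gone G -> gmul g h = gone G.
Proof.
move=> H; have -> : h = ginv g.
  by rewrite -[h](gmul1r _ h) -(gmulVr _ g) gmulA H gmul1.
exact: gmulVr.
Qed.



Local Open Scope ring_scope.

Lemma act0 (G : group) (M : zmodType) (act : G -> M -> M) g :
  is_Gmodule act -> act g 0 = 0.
Proof.
case=> Hadd _ _; have := Hadd g 0 0; rewrite addr0.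
by move/(congr1 (fun t => t - act g 0)); rewrite subrr addrK => H; rewrite -H.
Qed.

Lemma actN (G : group) (M : zmodType) (act : G -> M -> M) g x :
  is_Gmodule act -> act g (- x) = - act g x.
Proof.
move=> Hm; have := Hm; case=> Hadd _ _.
have := Hadd g (- x) x; rewrite addNr act0 // => /eqP.
by rewrite eq_sym addr_eq0 => /eqP.
Qed.

Lemma actMn (G : group) (M : zmodType) (act : G -> M -> M) g x n :
  is_Gmodule act -> act g (x *+ n) = act g x *+ n.
Proof.
move=> Hm; have := Hm; case=> Hadd _ _.
elim: n => [|n IH]; first by rewrite !mulr0n act0.
by rewrite !mulrS Hadd IH.
Qed.

Lemma actMz (G : group) (M : zmodType) (act : G -> M -> M) g x (z : int) :
  is_Gmodule act -> act g (x *~ z) = act g x *~ z.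
Proof.
move=> Hm; case: z => n; first by rewrite -!pmulrn actMn.
by rewrite NegzE !mulrNz actN // -!pmulrn actMn.
Qed.

Lemma sdmulA (G : group) (M : zmodType) (act : G -> M -> M) p q r :
  is_Gmodule act -> sdmul act p (sdmul act q r) = sdmul act (sdmul act p q) r.
Proof.
case=> Hadd _ Hmul; rewrite /sdmul /=; congr pair; last exact: gmulA.
by rewrite Hadd Hmul addrA.
Qed.

Lemma sdmul1 (G : group) (M : zmodType) (act : G -> M -> M) p :
  is_Gmodule act -> sdmul act (sdone G M) p = p.
Proof. case=> _ H1 _; case: p => m g; by rewrite /sdmul /= H1 add0r gmul1. Qed.

Lemma sdword_cat (G : group) (M : zmodType) (act : G -> M -> M) D a b :
  is_Gmodule act ->
  sdword act D (a ++ b) = sdmul act (sdword act D a) (sdword act D b).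
Proof.
move=> Hm; elim: a => [|l a IH] /=; first by rewrite sdmul1.
by rewrite IH sdmulA.
Qed.
Arguments sdword_cat {G M act D a b}.

End ModE.
Import ModE.

Module ModF.
Import GRing.Theory.

Definition invl {s} (l : 'I_s * bool) : 'I_s * bool := (l.1, ~~ l.2).

Definition wordT {s T} (uw : 'I_s * bool -> seq T) (w : seq ('I_s * bool)) :=
  foldr (fun l acc => uw l ++ acc) [::] w.
Definition wordinvT {s T} (uw : 'I_s * bool -> seq T) (w : seq ('I_s * bool)) :=
  foldr (fun l acc => acc ++ uw (invl l)) [::] w.
Definition midT {b T} (vb vbn : 'I_b -> seq T) (z : int) (i : 'I_b) :=
  match z with Posz n => flatten (nseq n (vb i)) | Negz n => flatten (nseq n.+1 (vbn i)) end.
Definition termT {s b T} uw (vb vbn : 'I_b -> seq T) (t : int * seq ('I_s * bool) * 'I_b) :=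
  wordT uw t.1.2 ++ midT vb vbn t.1.1 t.2 ++ wordinvT uw t.1.2.
Definition redT {s b T} uw (vb vbn : 'I_b -> seq T) (x : seq (int * seq ('I_s * bool) * 'I_b)) :=
  foldr (fun t acc => termT uw vb vbn t ++ acc) [::] x.

Lemma wordT_cons {s T} (uw : 'I_s * bool -> seq T) l w : wordT uw (l :: w) = uw l ++ wordT uw w.
Proof. by []. Qed.
Lemma wordinvT_cons {s T} (uw : 'I_s * bool -> seq T) l w :
  wordinvT uw (l :: w) = wordinvT uw w ++ uw (invl l).
Proof. by []. Qed.
Lemma redT_cons {s b T} uw (vb vbn : 'I_b -> seq T) (t : int * seq ('I_s * bool) * 'I_b) x :
  redT uw vb vbn (t :: x) = termT uw vb vbn t ++ redT uw vb vbn x.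
Proof. by []. Qed.

Local Open Scope ring_scope.

Lemma letter_inv (G : group) (S : seq G) l :
  gmul (letter S (invl l)) (letter S l) = gone G.
Proof. by case: l => i [] /=; rewrite /letter /=; [apply: gmulV | apply: gmulVr]. Qed.



Lemma sem_word (G : group) (M : zmodType) (act : G -> M -> M) (S : seq G) D uw w :
  is_Gmodule act -> (forall l, sdword act D (uw l) = (0, letter S l)) ->
  sdword act D (wordT uw w) = (0, gword S w).
Proof.
move=> Hm Hu; elim: w => [|l w IH] //.
by rewrite wordT_cons (sdword_cat Hm) IH Hu /sdmul /= act0 // addr0.
Qed.
Arguments sem_word {G M act S D uw} w.


Lemma sem_wordinv (G : group) (M : zmodType) (act : G -> M -> M) (S : seq G) D uw w :
  is_Gmodule act -> (forall l, sdword act D (uw l) = (0, letter S l)) ->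
  (sdword act D (wordinvT uw w)).1 = 0 /\
  gmul (sdword act D (wordinvT uw w)).2 (gword S w) = gone G.
Proof.
move=> Hm Hu; elim: w => [|l w [IH1 IH2]]; first by rewrite /= gmul1.
rewrite wordinvT_cons (sdword_cat Hm) Hu /sdmul /= IH1 act0 // addr0; split => //.
by rewrite -gmulA [gmul (letter _ _) _]gmulA letter_inv gmul1.
Qed.
Arguments sem_wordinv {G M act S D uw} w.


Lemma sem_rep (G : group) (M : zmodType) (act : G -> M -> M) D w m n :
  is_Gmodule act -> sdword act D w = (m, gone G) ->
  sdword act D (flatten (nseq n w)) = (m *+ n, gone G).
Proof.
move=> Hm Hw; have := Hm; case=> _ H1 _.
elim: n => [|n IH] //=; rewrite (sdword_cat Hm) IH Hw /sdmul /= H1 gmul1.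
by rewrite mulrS.
Qed.
Arguments sem_rep {G M act D w m} n.


Lemma sem_mid (G : group) (M : zmodType) (act : G -> M -> M) (B : seq M) D vb vbn z i :
  is_Gmodule act ->
  (forall i : 'I_(size B), sdword act D (vb i) = (nth 0 B i, gone G)) ->
  (forall i : 'I_(size B), sdword act D (vbn i) = (- nth 0 B i, gone G)) ->
  sdword act D (midT vb vbn z i) = (nth 0 B i *~ z, gone G).
Proof.
move=> Hm Hv Hvn; case: z => n /=.
  by rewrite (sem_rep n Hm (Hv i)) -pmulrn.
by rewrite (sem_rep n.+1 Hm (Hvn i)) NegzE mulrNz -pmulrn mulNrn.
Qed.
Arguments sem_mid {G M act B D vb vbn} z i.


Lemma sem_term (G : group) (M : zmodType) (act : G -> M -> M) (S : seq G) (B : seq M) D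
   uw vb vbn t :
  is_Gmodule act -> (forall l, sdword act D (uw l) = (0, letter S l)) ->
  (forall i : 'I_(size B), sdword act D (vb i) = (nth 0 B i, gone G)) ->
  (forall i : 'I_(size B), sdword act D (vbn i) = (- nth 0 B i, gone G)) ->
  sdword act D (termT uw vb vbn t) =
    (act (gword S t.1.2) (nth 0 B t.2) *~ t.1.1, gone G).
Proof.
move=> Hm Hu Hv Hvn; rewrite /termT !(sdword_cat Hm) (sem_word _ Hm Hu).
rewrite (sem_mid _ _ Hm Hv Hvn).
have [H1 H2] := sem_wordinv t.1.2 Hm Hu.
case: (sdword act D (wordinvT uw t.1.2)) H1 H2 => m h /= -> H2.
have := Hm; case=> _ Hone _.
rewrite /sdmul /= act0 // addr0 add0r gmul1 ginv_uniq // actMz //.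
Qed.
Arguments sem_term {G M act S B D uw vb vbn} t.


Lemma sem_red (G : group) (M : zmodType) (act : G -> M -> M) (S : seq G) (B : seq M) D
   uw vb vbn x :
  is_Gmodule act -> (forall l, sdword act D (uw l) = (0, letter S l)) ->
  (forall i : 'I_(size B), sdword act D (vb i) = (nth 0 B i, gone G)) ->
  (forall i : 'I_(size B), sdword act D (vbn i) = (- nth 0 B i, gone G)) ->
  sdword act D (redT uw vb vbn x) = (rho act S B x, gone G).
Proof.
move=> Hm Hu Hv Hvn; have := Hm; case=> _ Hone _.
rewrite /rho; elim: x => [|t x IH]; first by rewrite big_nil.
rewrite redT_cons (sdword_cat Hm) IH (sem_term t Hm Hu Hv Hvn) big_cons /sdmul /= Hone gmul1.
by [].
Qed.

End ModF.
Import ModF.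

Definition nth1 n := nth 0 (decode n) 1.
Definition catn a b := code (decode a ++ decode b).
Definition Ucode (tU : seq nat) x := nth 0 tU (2 * hdc x + nth1 x).
Definition Uicode (tU : seq nat) x := nth 0 tU (2 * hdc x + (1 - nth1 x)).
Definition wordc tU n := foldr (fun x acc => catn (Ucode tU x) acc) 0 (decode n).
Definition wordic tU n := foldr (fun x acc => catn acc (Uicode tU x)) 0 (decode n).
Definition midc (tV tVn : seq nat) z b :=
  (hdc z != 0) * repc (hdc (hdc z)) (nth 0 tV b) +
  (hdc z == 0) * repc (hdc (nth1 z)).+1 (nth 0 tVn b).
Definition termc tU tV tVn e :=
  catn (wordc tU (nth1 (hdc e)))
       (catn (midc tV tVn (hdc (hdc e)) (nth1 e)) (wordic tU (nth1 (hdc e)))).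
Definition redc tU tV tVn n :=
  foldr (fun e acc => catn (termc tU tV tVn e) acc) 0 (decode n).

Lemma cmp_catn {k g1 g2} : cmp k g1 -> cmp k g2 -> cmp k (fun v => catn (g1 v) (g2 v)).
Proof. exact: cmp_cat. Qed.

Lemma cmp_nth1 {k g} : cmp k g -> cmp k (fun v => nth1 (g v)).
Proof. move=> H; exact: (cmp_nth (cmp_const k 1) H). Qed.

Lemma cmp_Ucode tU {k g} : cmp k g -> cmp k (fun v => Ucode tU (g v)).
Proof.
move=> H; apply: cmp_tab; apply: cmp_add (cmp_nth1 H).
exact: cmp_mul (cmp_const k 2) (cmp_hd H).
Qed.

Lemma cmp_Uicode tU {k g} : cmp k g -> cmp k (fun v => Uicode tU (g v)).
Proof.
move=> H; apply: cmp_tab; apply: cmp_add (cmp_sub (cmp_const k 1) (cmp_nth1 H)).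
exact: cmp_mul (cmp_const k 2) (cmp_hd H).
Qed.

Lemma cmp_wordc tU {k g} : cmp k g -> cmp k (fun v => wordc tU (g v)).
Proof.
move=> H.
have Hh : cmp k.+2 (fun u => catn (Ucode tU (nth 0 u 0)) (nth 0 u 1)).
  exact: cmp_catn (cmp_Ucode tU (cmp_proj (isT : 0 < k.+2))) (cmp_proj (isT : 1 < k.+2)).
exact: (cmp_foldr Hh (cmp_const k 0) H).
Qed.

Lemma cmp_wordic tU {k g} : cmp k g -> cmp k (fun v => wordic tU (g v)).
Proof.
move=> H.
have Hh : cmp k.+2 (fun u => catn (nth 0 u 1) (Uicode tU (nth 0 u 0))).
  exact: cmp_catn (cmp_proj (isT : 1 < k.+2)) (cmp_Uicode tU (cmp_proj (isT : 0 < k.+2))).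
exact: (cmp_foldr Hh (cmp_const k 0) H).
Qed.

Lemma cmp_midc tV tVn {k g1 g2} : cmp k g1 -> cmp k g2 ->
  cmp k (fun v => midc tV tVn (g1 v) (g2 v)).
Proof.
move=> H1 H2; apply: cmp_add; apply: cmp_mul.
- apply: (cmp_ext _ (cmp_sub (cmp_const k 1) (cmp_eq0 (cmp_hd H1)))) => v _.
  by case: (hdc (g1 v) == 0).
- exact: cmp_rep (cmp_hd (cmp_hd H1)) (cmp_tab tV H2).
- exact: cmp_eq0 (cmp_hd H1).
- apply: cmp_rep (cmp_tab tVn H2).
  apply: (cmp_ext _ (cmp_add (cmp_hd (cmp_nth1 H1)) (cmp_const k 1))) => v _.
  by rewrite addn1.
Qed.

Lemma cmp_termc tU tV tVn {k g} : cmp k g -> cmp k (fun v => termc tU tV tVn (g v)).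
Proof.
move=> H; apply: cmp_catn; first exact: cmp_wordc (cmp_nth1 (cmp_hd H)).
apply: cmp_catn; last exact: cmp_wordic (cmp_nth1 (cmp_hd H)).
exact: cmp_midc (cmp_hd (cmp_hd H)) (cmp_nth1 H).
Qed.

Lemma cmp_redc tU tV tVn : cmp 1 (fun v => redc tU tV tVn (nth 0 v 0)).
Proof.
have Hh : cmp 3 (fun u => catn (termc tU tV tVn (nth 0 u 0)) (nth 0 u 1)).
  exact: cmp_catn (cmp_termc tU tV tVn (cmp_proj (isT : 0 < 3))) (cmp_proj (isT : 1 < 3)).
exact: (cmp_foldr Hh (cmp_const 1 0) (cmp_proj (isT : 0 < 1))).
Qed.

Definition cmpb k (b : seq nat -> bool) := cmp k (fun v => nat_of_bool (b v)).

Lemma cmpb_and {k b1 b2} : cmpb k b1 -> cmpb k b2 -> cmpb k (fun v => b1 v && b2 v).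
Proof.
move=> H1 H2; apply: (cmp_ext _ (cmp_mul H1 H2)) => v _.
by case: (b1 v); case: (b2 v).
Qed.

Lemma cmpb_neg {k b} : cmpb k b -> cmpb k (fun v => ~~ b v).
Proof.
move=> H; apply: (cmp_ext _ (cmp_sub (cmp_const k 1) H)) => v _.
by case: (b v).
Qed.

Lemma cmpb_or {k b1 b2} : cmpb k b1 -> cmpb k b2 -> cmpb k (fun v => b1 v || b2 v).
Proof.
move=> H1 H2; apply: (cmp_ext _ (cmpb_neg (cmpb_and (cmpb_neg H1) (cmpb_neg H2)))) => v _.
by case: (b1 v); case: (b2 v).
Qed.

Lemma cmpb_eq {k g1 g2} : cmp k g1 -> cmp k g2 -> cmpb k (fun v => g1 v == g2 v).
Proof. exact: cmp_eqn. Qed.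
Lemma cmpb_lt {k g1 g2} : cmp k g1 -> cmp k g2 -> cmpb k (fun v => g1 v < g2 v).
Proof. exact: cmp_ltn. Qed.

Definition vlet sS x := (size (decode x) == 2) && (hdc x < sS) && (nth1 x < 2).
Definition vint z := (size (decode z) == 2) &&
  ( ((hdc z != 0) && (nth1 z == 0) && (size (decode (hdc z)) == 1)) ||
    ((hdc z == 0) && (nth1 z != 0) && (size (decode (nth1 z)) == 1)) ).
Definition vel sS sB e := (size (decode e) == 2) && (nth1 e < sB) &&
  (size (decode (hdc e)) == 2) && vint (hdc (hdc e)) &&
  (allc (fun x => nat_of_bool (vlet sS x)) (nth1 (hdc e)) == 1).
Definition validc sS sB n := allc (fun e => nat_of_bool (vel sS sB e)) n.

Lemma cmpb_vlet sS {k g} : cmp k g -> cmpb k (fun v => vlet sS (g v)).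
Proof.
move=> H; apply: cmpb_and; first apply: cmpb_and.
- exact: cmpb_eq (cmp_size H) (cmp_const k 2).
- exact: cmpb_lt (cmp_hd H) (cmp_const k sS).
- exact: cmpb_lt (cmp_nth1 H) (cmp_const k 2).
Qed.

Lemma cmpb_vint {k g} : cmp k g -> cmpb k (fun v => vint (g v)).
Proof.
move=> H; apply: cmpb_and; first exact: cmpb_eq (cmp_size H) (cmp_const k 2).
apply: cmpb_or; apply: cmpb_and; try apply: cmpb_and.
- exact: cmpb_neg (cmpb_eq (cmp_hd H) (cmp_const k 0)).
- exact: cmpb_eq (cmp_nth1 H) (cmp_const k 0).
- exact: cmpb_eq (cmp_size (cmp_hd H)) (cmp_const k 1).
- exact: cmpb_eq (cmp_hd H) (cmp_const k 0).
- exact: cmpb_neg (cmpb_eq (cmp_nth1 H) (cmp_const k 0)).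
- exact: cmpb_eq (cmp_size (cmp_nth1 H)) (cmp_const k 1).
Qed.

Lemma cmpb_vel sS sB {k g} : cmp k g -> cmpb k (fun v => vel sS sB (g v)).
Proof.
move=> H; apply: cmpb_and; last first.
  apply: cmpb_eq (cmp_const k 1); apply: (cmp_allc _ _ (cmp_nth1 (cmp_hd H))).
  exact: cmpb_vlet (cmp_proj (isT : 0 < 1)).
apply: cmpb_and; last exact: cmpb_vint (cmp_hd (cmp_hd H)).
apply: cmpb_and; last exact: cmpb_eq (cmp_size (cmp_hd H)) (cmp_const k 2).
apply: cmpb_and; first exact: cmpb_eq (cmp_size H) (cmp_const k 2).
exact: cmpb_lt (cmp_nth1 H) (cmp_const k sB).
Qed.

Lemma cmp_validc sS sB : cmp 1 (fun v => validc sS sB (nth 0 v 0)).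
Proof.
apply: (cmp_allc _ _ (cmp_proj (isT : 0 < 1))).
exact: cmpb_vel (cmp_proj (isT : 0 < 1)).
Qed.

Lemma pk_seq (T : countType) (s : seq T) : pickle s = code (map pickle s).
Proof. by []. Qed.
Lemma dk_seq (T : countType) (s : seq T) : decode (pickle s) = map pickle s.
Proof. by rewrite pk_seq CodeSeq.codeK. Qed.
Lemma pk_pair (T1 T2 : countType) (x : T1) (y : T2) :
  pickle (x, y) = code [:: pickle x; pickle y].
Proof. by []. Qed.
Lemma pk_ord n (i : 'I_n) : pickle i = val i. Proof. by []. Qed.
Lemma pk_bool (b : bool) : pickle b = nat_of_bool b. Proof. by []. Qed.
Lemma pk_pos n : pickle (Posz n) = code [:: code [:: n]; 0]. Proof. by []. Qed.
Lemma pk_neg n : pickle (Negz n) = code [:: 0; code [:: n]]. Proof. by []. Qed.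

Lemma hdc_code x s : hdc (code (x :: s)) = x.
Proof. by rewrite /hdc CodeSeq.codeK. Qed.
Lemma nth1_code x y s : nth1 (code [:: x, y & s]) = y.
Proof. by rewrite /nth1 CodeSeq.codeK. Qed.

Lemma catn_pk (T : countType) (s t : seq T) : catn (pickle s) (pickle t) = pickle (s ++ t).
Proof. by rewrite /catn !dk_seq -map_cat. Qed.



Lemma Ucode_pk {s} {T : countType} (uw : 'I_s * bool -> seq T) tU l :
  (forall l : 'I_s * bool, nth 0 tU (2 * val l.1 + l.2) = pickle (uw l)) ->
  Ucode tU (pickle l) = pickle (uw l).
Proof.
move=> Ht; case: l => i c; rewrite /Ucode pk_pair hdc_code nth1_code.
exact: (Ht (i, c)).
Qed.

Lemma Uicode_pk {s} {T : countType} (uw : 'I_s * bool -> seq T) tU l :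
  (forall l : 'I_s * bool, nth 0 tU (2 * val l.1 + l.2) = pickle (uw l)) ->
  Uicode tU (pickle l) = pickle (uw (invl l)).
Proof.
move=> Ht; case: l => i c; rewrite /Uicode pk_pair hdc_code nth1_code.
rewrite -(Ht (i, ~~ c)) /=; congr (nth _ _ (_ + _)).
by case: c.
Qed.

Lemma wordc_pk {s} {T : countType} (uw : 'I_s * bool -> seq T) tU w :
  (forall l : 'I_s * bool, nth 0 tU (2 * val l.1 + l.2) = pickle (uw l)) ->
  wordc tU (pickle w) = pickle (wordT uw w).
Proof.
move=> Ht; rewrite /wordc dk_seq; elim: w => [|l w IH] //=.
by rewrite IH (Ucode_pk _ _ _ Ht) catn_pk.
Qed.

Lemma wordic_pk {s} {T : countType} (uw : 'I_s * bool -> seq T) tU w :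
  (forall l : 'I_s * bool, nth 0 tU (2 * val l.1 + l.2) = pickle (uw l)) ->
  wordic tU (pickle w) = pickle (wordinvT uw w).
Proof.
move=> Ht; rewrite /wordic dk_seq; elim: w => [|l w IH] //=.
by rewrite IH (Uicode_pk _ _ _ Ht) catn_pk.
Qed.

Lemma repc_pk {T : countType} n (w : seq T) : repc n (pickle w) = pickle (flatten (nseq n w)).
Proof. by rewrite /repc dk_seq pk_seq map_flatten map_nseq. Qed.

Lemma midc_pk {b} {T : countType} (vb vbn : 'I_b -> seq T) tV tVn z i :
  (forall i : 'I_b, nth 0 tV i = pickle (vb i)) ->
  (forall i : 'I_b, nth 0 tVn i = pickle (vbn i)) ->
  midc tV tVn (pickle z) (val i) = pickle (midT vb vbn z i).
Proof.
move=> Hv Hvn; rewrite /midc; case: z => n.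
  rewrite pk_pos hdc_code hdc_code Hv repc_pk.
  rewrite (_ : (code [:: n] == 0) = false); last by rewrite code_eq0.
  by rewrite (_ : nat_of_bool (~~ false) = 1) // (_ : nat_of_bool false = 0) // mul1n mul0n addn0.
rewrite pk_neg hdc_code nth1_code hdc_code Hvn repc_pk.
by rewrite (_ : nat_of_bool (0 == 0) = 1) // (_ : nat_of_bool (0 != 0) = 0) // mul1n mul0n add0n.
Qed.

Lemma termc_pk {s b} {T : countType} (uw : 'I_s * bool -> seq T) (vb vbn : 'I_b -> seq T)
    tU tV tVn (t : int * seq ('I_s * bool) * 'I_b) :
  (forall l : 'I_s * bool, nth 0 tU (2 * val l.1 + l.2) = pickle (uw l)) ->
  (forall i : 'I_b, nth 0 tV i = pickle (vb i)) ->
  (forall i : 'I_b, nth 0 tVn i = pickle (vbn i)) ->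
  termc tU tV tVn (pickle t) = pickle (termT uw vb vbn t).
Proof.
move=> Ht Hv Hvn; case: t => [[z w] i].
rewrite /termc !pk_pair hdc_code nth1_code hdc_code nth1_code.
rewrite (wordc_pk _ _ _ Ht) (wordic_pk _ _ _ Ht) pk_ord (midc_pk _ _ _ _ _ _ Hv Hvn).
by rewrite !catn_pk.
Qed.

Lemma redc_pk {s b} {T : countType} (uw : 'I_s * bool -> seq T) (vb vbn : 'I_b -> seq T)
    tU tV tVn (x : seq (int * seq ('I_s * bool) * 'I_b)) :
  (forall l : 'I_s * bool, nth 0 tU (2 * val l.1 + l.2) = pickle (uw l)) ->
  (forall i : 'I_b, nth 0 tV i = pickle (vb i)) ->
  (forall i : 'I_b, nth 0 tVn i = pickle (vbn i)) ->
  redc tU tV tVn (pickle x) = pickle (redT uw vb vbn x).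
Proof.
move=> Ht Hv Hvn; rewrite /redc dk_seq; elim: x => [|t x IH] //=.
by rewrite IH (termc_pk _ _ _ _ _ _ _ Ht Hv Hvn) catn_pk.
Qed.

Lemma seq_exists (T : countType) (P : nat -> bool) n :
  (forall x, P x -> exists t : T, pickle t = x) -> all P (decode n) ->
  exists s : seq T, pickle s = n.
Proof.
move=> HP Hall.
suff [s Hs] : exists s : seq T, map pickle s = decode n.
  by exists s; rewrite pk_seq Hs CodeSeq.decodeK.
elim: (decode n) Hall => [|x l IH] /=; first by exists [::].
case/andP => /HP [t Ht] /IH [s Hs]; exists (t :: s) => /=; by rewrite Ht Hs.
Qed.

Arguments seq_exists {T} P {n}.

Lemma decode2 x : size (decode x) == 2 -> x = code [:: hdc x; nth1 x].
Proof.
move=> H; rewrite -{1}(CodeSeq.decodeK x) /hdc /nth1.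
by case: (decode x) H => [|a [|c [|]]].
Qed.

Lemma decode1 x : size (decode x) == 1 -> x = code [:: hdc x].
Proof.
move=> H; rewrite -{1}(CodeSeq.decodeK x) /hdc.
by case: (decode x) H => [|a [|]].
Qed.

Arguments decode2 {x}.
Arguments decode1 {x}.

Lemma vlet_pk sS (l : 'I_sS * bool) : vlet sS (pickle l).
Proof.
case: l => i c; rewrite /vlet pk_pair hdc_code nth1_code CodeSeq.codeK pk_ord ltn_ord /=.
by case: c.
Qed.

Lemma vlet_ex sS x : vlet sS x -> exists l : 'I_sS * bool, pickle l = x.
Proof.
case/andP => /andP [H2 Hi] Hc.
exists (Ordinal Hi, nth1 x == 1); rewrite pk_pair pk_ord pk_bool /= [RHS](decode2 H2).
congr (code [:: _; _]).
by move: Hc; case: (nth1 x) => [|[|]].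
Qed.

Lemma allc_vlet_pk sS (w : seq ('I_sS * bool)) :
  allc (fun x => nat_of_bool (vlet sS x)) (pickle w) == 1.
Proof.
rewrite allcP; last by move=> x; case: (vlet sS x).
rewrite dk_seq all_map; apply/allP => l _ /=; by rewrite vlet_pk.
Qed.

Lemma allc_vlet_ex sS n : allc (fun x => nat_of_bool (vlet sS x)) n == 1 ->
  exists w : seq ('I_sS * bool), pickle w = n.
Proof.
rewrite allcP; last by move=> x; case: (vlet sS x).
move=> H; apply: (seq_exists (fun x => vlet sS x) (vlet_ex sS)).
apply/allP => x Hx; by have := allP H x Hx; case: (vlet sS x).
Qed.

Lemma vint_pk (z : int) : vint (pickle z).
Proof.
case: z => n; rewrite /vint ?pk_pos ?pk_neg hdc_code nth1_code;
  by rewrite !CodeSeq.codeK !code_eq0.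
Qed.

Lemma vint_ex z : vint z -> exists zi : int, pickle zi = z.
Proof.
case/andP => H2 /orP [/andP [/andP [Hp Hq] H1]|/andP [/andP [Hp Hq] H1]].
  exists (Posz (hdc (hdc z))); rewrite pk_pos [RHS](decode2 H2).
  by rewrite -(decode1 H1) (eqP Hq).
exists (Negz (hdc (nth1 z))); rewrite pk_neg [RHS](decode2 H2).
by rewrite -(decode1 H1) (eqP Hp).
Qed.

Lemma vel_pk sS sB (t : int * seq ('I_sS * bool) * 'I_sB) : vel sS sB (pickle t).
Proof.
case: t => [[z w] i]; rewrite /vel !pk_pair !hdc_code !nth1_code !CodeSeq.codeK.
by rewrite pk_ord ltn_ord vint_pk allc_vlet_pk.
Qed.

Lemma vel_ex sS sB e : vel sS sB e ->
  exists t : int * seq ('I_sS * bool) * 'I_sB, pickle t = e.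
Proof.
case/andP => /andP [/andP [/andP [H2 Hb] H2'] Hz] Hw.
have [zi Hzi] := vint_ex _ Hz; have [w Hw'] := allc_vlet_ex _ _ Hw.
exists ((zi, w), Ordinal Hb).
rewrite !pk_pair Hzi Hw' pk_ord [RHS](decode2 H2).
congr (code [:: _; _]); exact: (esym (decode2 H2')).
Qed.

Lemma validc_pk sS sB (x : seq (int * seq ('I_sS * bool) * 'I_sB)) :
  validc sS sB (pickle x) = 1.
Proof.
apply/eqP; rewrite /validc allcP; last by move=> e; case: (vel sS sB e).
rewrite dk_seq all_map; apply/allP => t _.
change (nat_of_bool (vel sS sB (pickle t)) == 1); by rewrite vel_pk.
Qed.

Lemma validc_ex sS sB n : validc sS sB n = 1 ->
  exists x : seq (int * seq ('I_sS * bool) * 'I_sB), pickle x = n.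
Proof.
move/eqP; rewrite /validc allcP; last by move=> e; case: (vel sS sB e).
move=> H; apply: (seq_exists (fun e => vel sS sB e) (vel_ex sS sB)).
apply/allP => x Hx; by have := allP H x Hx; case: (vel sS sB x).
Qed.

Lemma validc_le1 sS sB n : validc sS sB n <= 1.
Proof. apply: allc_le1 => e; by case: (vel sS sB e). Qed.

Lemma pinvK (T : countType) n (x : T) : pickle_inv n = Some x -> pickle x = n.
Proof. by move=> E; have := @pickle_invK T n; rewrite E. Qed.

Theorem proposition1
  (G : group) (M : zmodType) (act : G -> M -> M)
  (Hmod : is_Gmodule act)
  (S : seq G) (HS : generates S)
  (B : seq M) (HB : module_generates act S B)
  (X : seq M)
  (Hundec : ~ decidable_on
              (fun x : freemod (size S) (size B) => in_NGspan act X (rho act S B x))) :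
  forall D : seq (M * G), sd_generates act D ->
    ~ decidable_on
        (fun w : seq ('I_(size D) * bool) => in_NsdG act X (sdword act D w)).
Proof.
move=> D HD [p Hp]; apply: Hundec.
have [uw Hu] : exists uw : 'I_(size S) * bool -> seq ('I_(size D) * bool),
    forall l, sdword act D (uw l) = (0%R, letter S l).
  apply: (@fin_all_exists _ (fun _ => seq ('I_(size D) * bool)) (fun l w => sdword act D w = (0%R, letter S l))) => l.
  by have [w Hw] := HD (0%R, letter S l); exists w.
have [vb Hv] : exists vb : 'I_(size B) -> seq ('I_(size D) * bool),
    forall i, sdword act D (vb i) = (nth 0%R B i, gone G).
  apply: (@fin_all_exists _ (fun _ => seq ('I_(size D) * bool)) (fun (i : 'I_(size B)) w => sdword act D w = (nth 0%R B i, gone G))) => i.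
  by have [w Hw] := HD (nth 0%R B i, gone G); exists w.
have [vbn Hvn] : exists vb : 'I_(size B) -> seq ('I_(size D) * bool),
    forall i, sdword act D (vb i) = (- nth 0%R B i, gone G)%R.
  apply: (@fin_all_exists _ (fun _ => seq ('I_(size D) * bool)) (fun (i : 'I_(size B)) w => sdword act D w = (- nth 0%R B i, gone G)%R)) => i.
  by have [w Hw] := HD ((- nth 0%R B i)%R, gone G); exists w.
pose fU := fun j => if @insub _ (fun k => k < size S) 'I_(size S) (j./2) is Some i
                    then pickle (uw (i, odd j)) else 0.
pose tU := mkseq fU (2 * size S).
have HtU : forall l : 'I_(size S) * bool, nth 0 tU (2 * val l.1 + l.2) = pickle (uw l).
  case=> i c /=; rewrite nth_mkseq; last by have := ltn_ord i; case: c => /=; lia.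
  rewrite /fU; case: insubP => [j Hj Hjv|].
    have -> : odd (2 * i + c) = c by case: c {Hj Hjv}; rewrite oddD oddM.
    have -> : j = i; last by [].
    by apply: val_inj; rewrite Hjv; case: c {Hj Hjv} => /=; lia.
  move=> Hn; exfalso; apply/negP: Hn; have := ltn_ord i; case: c => /= Hi; lia.
pose fV := fun (w : 'I_(size B) -> seq ('I_(size D) * bool)) j =>
   if @insub _ (fun k => k < size B) 'I_(size B) j is Some i then pickle (w i) else 0.
have HtV : forall w (i : 'I_(size B)), nth 0 (mkseq (fV w) (size B)) i = pickle (w i).
  move=> w i; rewrite nth_mkseq // /fV; case: insubP => [j Hj Hjv|].
    by rewrite (_ : j = i) //; apply: val_inj.
  by rewrite ltn_ord.
pose tV := mkseq (fV vb) (size B); pose tVn := mkseq (fV vbn) (size B).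
have [pR HR] := cmp_redc tU tV tVn.
have [pV HV] := cmp_validc (size S) (size B).
have [pM HM] := mul_base.
have [pE HE] : cmp 1 (fun v => nat_of_bool (nth 0 v 0 == 1)).
  exact: cmp_eqn (cmp_proj (isT : 0 < 1)) (cmp_const 1 1).
exists (PComp pM [:: pV; PComp pE [:: PComp p [:: pR]]]) => n.
have [y [Hy Hy1]] := Hp (redc tU tV tVn n).
exists (validc (size S) (size B) n * nat_of_bool (y == 1)); split.
  apply: (@ev_comp pM _ [:: n] [:: validc (size S) (size B) n; nat_of_bool (y == 1)]);
    last exact: (HM [:: validc (size S) (size B) n; nat_of_bool (y == 1)]).
  apply: evs_cons; first exact: (HV [:: n]).
  apply: evs_cons; last exact: evs_nil.
  apply: (@ev_comp pE _ [:: n] [:: y]); last exact: (HE [:: y]).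
  apply: evs_cons; last exact: evs_nil.
  apply: (@ev_comp p _ [:: n] [:: redc tU tV tVn n]) Hy.
  apply: evs_cons; last exact: evs_nil.
  exact: (HR [:: n]).
case E: (pickle_inv n) => [x|].
  have Ex := pinvK _ _ _ E.
  move: Hy1; rewrite -Ex validc_pk mul1n (redc_pk uw vb vbn tU tV tVn x HtU (HtV vb) (HtV vbn)).
  rewrite pickleK_inv /in_NsdG (sem_red _ _ _ _ _ _ _ _ _ x Hmod Hu Hv Hvn) /= => <-.
  by case: eqP.
have V0 : validc (size S) (size B) n = 0.
  have := validc_le1 (size S) (size B) n.
  case H1 : (validc _ _ n) => [|[|]] // _.
  have [x Hx] := validc_ex _ _ _ H1.
  by move: E; rewrite -Hx pickleK_inv.
by rewrite V0 mul0n.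
Qed.
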